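(* Let $(\Delta,\mathcal H)$ be a generic cut with associated simplicial complexes $K_\Delta,K_+$ on $\widetilde{[m]}=[m]\cup\{o\}$. For $\sigma\subset\widetilde{[m]}$ let $F_\sigma=\bigcap_{i\in\sigma}H_i$, and let $Z=\{\sigma\subset\widetilde{[m]}: F_\sigma\neq\varnothing\text{ and }F_\sigma\subset\Delta_+\setminus H_o\}$. Then $$K_+\setminus\overline Z=O_{K_+}(o),\qquad K_\Delta\setminus\overline Z=\{\sigma\subset\widetilde{[m]}:F_\sigma\ne\varnothing\text{ and }F_\sigma\subset\Delta_-\setminus H_o\}.$$
   Context: Let $\Delta\subset\mathbb R^n$ be an $n$-dimensional simple polytope $\Delta=\{x:\langle x,\lambda_i\rangle+\eta_i\ge0,\ i=1,\dots,m\}$ whose facets $H_i=\Delta\cap\{\langle x,\lambda_i\rangle+\eta_i=0\}$ are all nonempty. A generic cut is a hyperplane $\mathcal H=\{\langle x,\lambda_0\rangle+\xi=0\}$ in general position with the hyperplanes $\{\langle x,\lambda_i\rangle+\eta_i=0\}$ and with $H_o:=\mathcal H\cap\Delta\neq\varnothing$ (so $H_o$ is the facet indexed by $o$). Set $\Delta_\pm=\Delta\cap\{\pm(\langle x,\lambda_0\rangle+\xi)\ge0\}$, $K_\Delta=\{\sigma\subset[m]:\bigcap_{i\in\sigma}H_i\ne\varnothing\}\cup\{\varnothing\}$, $K_+=\{\sigma\subset\widetilde{[m]}:\bigcap_{i\in\sigma}(H_i\cap\Delta_+)\ne\varnothing\}\cup\{\varnothing\}$. $\overline Z$ is the smallest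 simplicial complex containing $Z$, and $O_{K_+}(o)=\{\sigma\in K_+: o\in\sigma\}$. *)

(* Defs.v *)
From HB Require Import structures.
From mathcomp Require Import all_boot all_order all_algebra.
From mathcomp Require Import reals.
Set Implicit Arguments. Unset Strict Implicit. Unset Printing Implicit Defensive.
Import Order.TTheory GRing.Theory Num.Theory.
Local Open Scope ring_scope.

Section Cut.
Variables (R : realType) (n m : nat).
(* Delta = {x : <x, lam i> + eta i >= 0, i in [m]};  cut H = {<x, lam0> + xi = 0}.
   The extended index set [m] ∪ {o} is  option 'I_m, with o = None. *)
Variables (lam : 'I_m -> 'rV[R]_n) (eta : 'I_m -> R) (lam0 : 'rV[R]_n) (xi : R).

Definition dot (x y : 'rV[R]_n) : R := \sum_(j < n) x 0 j * y 0 j.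

Definition ineq (i : 'I_m) (x : 'rV[R]_n) : R := dot x (lam i) + eta i.
Definition inDelta (x : 'rV[R]_n) : Prop := forall i, 0 <= ineq i x.
Definition facet (i : 'I_m) (x : 'rV[R]_n) : Prop := inDelta x /\ ineq i x = 0.

Definition cutval (x : 'rV[R]_n) : R := dot x lam0 + xi.
Definition Ho (x : 'rV[R]_n) : Prop := inDelta x /\ cutval x = 0.
Definition Hface (i : option 'I_m) (x : 'rV[R]_n) : Prop :=
  match i with Some j => facet j x | None => Ho x end.
Definition DeltaP (x : 'rV[R]_n) : Prop := inDelta x /\ 0 <= cutval x.
Definition DeltaM (x : 'rV[R]_n) : Prop := inDelta x /\ cutval x <= 0.

Definition bounded_Delta : Prop :=
  exists B : R, forall x, inDelta x -> forall j, `|x 0 j| <= B.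
Definition fulldim_Delta : Prop := exists x, forall i, 0 < ineq i x.
Definition vertex (x : 'rV[R]_n) : Prop :=
  inDelta x /\ forall y z, inDelta y -> inDelta z -> x = 2^-1 *: (y + z) -> y = z.
Definition simple_Delta : Prop :=
  forall x, vertex x -> #|[set i | ineq i x == 0]| = n.
Definition simple_polytope : Prop :=
  [/\ bounded_Delta, fulldim_Delta & simple_Delta].
Definition facets_nonempty : Prop := forall i, exists x, facet i x.

(* general position of H with respect to the hyperplanes {<x,lam i> + eta i = 0}:
   for every S ⊆ [m] whose affine intersection L_S is nonempty, H meets L_S
   transversally (lam0 not in span of the normals of S) if dim L_S > 0, and
   H misses L_S if L_S is a point. *)
Definition Laff (S : {set 'I_m}) (x : 'rV[R]_n) : Prop :=
  forall i, i \in S -> ineq i x = 0.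
Definition normals (S : {set 'I_m}) : 'M[R]_(m, n) :=
  \matrix_(i < m) (if i \in S then lam i else 0).
Definition general_position : Prop :=
  forall S : {set 'I_m}, (exists x, Laff S x) ->
    ((\rank (normals S) < n)%N -> ~~ (lam0 <= normals S)%MS) /\
    (\rank (normals S) = n -> forall x, Laff S x -> cutval x <> 0).
Definition generic_cut : Prop := general_position /\ exists x, Ho x.

Definition KDelta (s : {set option 'I_m}) : Prop :=
  None \notin s /\ (s = set0 \/ exists x, forall i, i \in s -> Hface i x).
Definition Kplus (s : {set option 'I_m}) : Prop :=
  s = set0 \/ exists x, forall i, i \in s -> (Hface i x /\ DeltaP x).
Definition Oplus (s : {set option 'I_m}) : Prop := Kplus s /\ None \in s.
Definition F (s : {set option 'I_m}) (x : 'rV[R]_n) : Prop :=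
  inDelta x /\ forall i, i \in s -> Hface i x.
Definition Zset (s : {set option 'I_m}) : Prop :=
  (exists x, F s x) /\ forall x, F s x -> DeltaP x /\ ~ Ho x.
(* smallest simplicial complex (containing ∅) containing Z *)
Definition Zbar (s : {set option 'I_m}) : Prop :=
  s = set0 \/ exists t, Zset t /\ s \subset t.
Definition Wminus (s : {set option 'I_m}) : Prop :=
  (exists x, F s x) /\ forall x, F s x -> DeltaM x /\ ~ Ho x.

End Cut.

(* Main.v *)
Require Import Defs.
From HB Require Import structures.
From mathcomp Require Import all_boot all_order all_algebra.
From mathcomp Require Import reals.
From Stdlib Require Import Classical.
From mathcomp Require Import lra zify.
Import Order.TTheory GRing.Theory Num.Theory.
Local Open Scope ring_scope.

Lemma dotDZ (R : realType) (n : nat) (x d y : 'rV[R]_n) (a : R) :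
  dot (x + a *: d) y = dot x y + a * dot d y.
Proof.
rewrite /dot mulr_sumr -big_split /=; apply: eq_bigr => j _.
by rewrite !mxE mulrDl mulrA.
Qed.

Lemma dotB (R : realType) (n : nat) (x y v : 'rV[R]_n) :
  dot (x - y) v = dot x v - dot y v.
Proof.
rewrite /dot -sumrB; apply: eq_bigr => j _.
by rewrite !mxE mulrBl.
Qed.

Definition FT {R : realType} {n m : nat} (lam : 'I_m -> 'rV[R]_n) (eta : 'I_m -> R)
  (t : {set 'I_m}) (x : 'rV[R]_n) : Prop :=
  inDelta lam eta x /\ forall i, i \in t -> ineq lam eta i x = 0.

Lemma ray (R : realType) (n m : nat)
  (lam : 'I_m -> 'rV[R]_n) (eta : 'I_m -> R) (lam0 : 'rV[R]_n) (xi : R)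
  (t : {set 'I_m}) (x d : 'rV[R]_n) :
  bounded_Delta lam eta -> inDelta lam eta x -> 0 < dot d lam0 ->
  (forall i, i \in t -> ineq lam eta i x = 0 /\ dot d (lam i) = 0) ->
  exists j z, j \notin t /\ FT lam eta (j |: t) z /\ cutval lam0 xi x <= cutval lam0 xi z.
Proof.
move=> [B HB] Hx Hc Ht.
have ineqZ : forall i (a : R), ineq lam eta i (x + a *: d) = ineq lam eta i x + a * dot d (lam i).
  by move=> i a; rewrite /ineq dotDZ addrAC.
have cutZ : forall a : R, cutval lam0 xi (x + a *: d) = cutval lam0 xi x + a * dot d lam0.
  by move=> a; rewrite /cutval dotDZ addrAC.
pose J := [pred j | dot d (lam j) < 0].
have [j0 Jj0 | J0] := pickP J; last first.
  exfalso.
  have [k Hk] : exists k, d 0 k != 0.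
    apply: NNPP => Hn.
    have : dot d lam0 = 0.
      rewrite /dot big1 // => k _.
      have : ~ (d 0 k != 0) by move=> H; apply: Hn; exists k.
      by move/negP; rewrite negbK => /eqP ->; rewrite mul0r.
    by move=> H; move: Hc; rewrite H ltxx.
  pose a := (B + `|x 0 k| + 1) / `|d 0 k|.
  have Hin : inDelta lam eta (x + a *: d).
    move=> i; rewrite ineqZ; apply: addr_ge0; first exact: Hx.
    have Bge : 0 <= B by apply: le_trans (HB x Hx k).
    apply: mulr_ge0.
      apply: divr_ge0 => //; rewrite addr_ge0 // addr_ge0 //.
    by rewrite leNgt; move: (J0 i) => /= ->.
  have := HB _ Hin k; rewrite !mxE.
  have Bge : 0 <= B by apply: le_trans (HB x Hx k).
  have nd : 0 < `|d 0 k| by rewrite normr_gt0.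
  have e1 : `|a * d 0 k| = B + `|x 0 k| + 1.
    rewrite normrM /a ger0_norm ?divfK ?lt0r_neq0 //.
    by apply: divr_ge0 => //; rewrite !addr_ge0.
  have := lerB_normD (a * d 0 k) (x 0 k); rewrite e1 addrC => H1 H2.
  have := le_trans H1 H2; lra.

pose r := fun i => ineq lam eta i x / (- dot d (lam i)).
have [j Jj Hmin] := @real_arg_minP R 'I_m j0 J r Jj0 (fun i _ => num_real (r i)).
have aj : dot d (lam j) < 0 := Jj.
have rj0 : 0 <= r j by rewrite /r divr_ge0 // ?Hx // oppr_ge0 ltW.
exists j, (x + r j *: d); split; [|split; [split|]].
- apply/negP => /Ht [_ H]; by move: aj; rewrite H ltxx.
- move=> i; rewrite ineqZ.
  have [ai|ai] := leP 0 (dot d (lam i)).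
    by apply: addr_ge0; [exact: Hx|exact: mulr_ge0].
  have := Hmin i ai; rewrite /r => H.
  have ai' : 0 < - dot d (lam i) by rewrite oppr_gt0.
  rewrite -subr_ge0 in H.
  have : ineq lam eta j x / - dot d (lam j) * dot d (lam i) >= - ineq lam eta i x.
    rewrite -[X in _ <= X](opprK) -mulrN lerNl opprK.
    by rewrite -ler_pdivlMr // -subr_ge0.
  by rewrite -subr_ge0 opprK addrC.
- move=> i; rewrite in_setU1 => /orP [/eqP -> |/Ht [H1 H2]].
    rewrite ineqZ /r invrN mulrN mulNr divfK ?subrr //.
    by rewrite lt_eqF.
  by rewrite ineqZ H1 H2 mulr0 addr0.
- by rewrite cutZ lerDl mulr_ge0 // ltW.
Qed.
Arguments ray {R n m lam eta lam0} xi t {x d}.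

Lemma gp_dir (R : realType) (n m : nat)
  (lam : 'I_m -> 'rV[R]_n) (eta : 'I_m -> R) (lam0 : 'rV[R]_n) (xi : R) (x : 'rV[R]_n) :
  general_position lam eta lam0 xi -> cutval lam0 xi x = 0 ->
  exists d, 0 < dot d lam0 /\ forall i, ineq lam eta i x = 0 -> dot d (lam i) = 0.
Proof.
move=> Hgp Hcx.
pose S := [set i | ineq lam eta i x == 0].
have HL : Laff lam eta S x by move=> i; rewrite inE => /eqP.
have [H1 H2] := Hgp S (ex_intro _ x HL).
have := rank_leq_col (normals lam S); rewrite leq_eqVlt => /orP [/eqP Hr|Hr].
  by exfalso; exact: (H2 Hr x HL Hcx).
have := H1 Hr; rewrite submxE => Hne.
set C := cokermx (normals lam S) in Hne.
have [k Hk] : exists k, (lam0 *m C) 0 k != 0.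
  apply: NNPP => Hn; move/negP: Hne; apply; apply/eqP/matrixP => i k.
  rewrite (ord1 i) [RHS]mxE; apply: NNPP => H; apply: Hn; exists k; apply/eqP; exact: H.
pose d0 : 'rV[R]_n := \row_j C j k.
have dd : forall v : 'rV[R]_n, dot d0 v = (v *m C) 0 k.
  move=> v; rewrite /dot mxE; apply: eq_bigr => j _; by rewrite mxE mulrC.
pose c := dot d0 lam0.
exists (c *: d0); split.
  rewrite -[c *: d0]add0r dotDZ /dot big1 ?add0r; last by move=> j _; rewrite mxE mul0r.
  by rewrite -/(dot d0 lam0) -/c -expr2 exprn_even_gt0 //= /c dd.
move=> i Hi.
rewrite -[c *: d0]add0r dotDZ /dot big1 ?add0r; last by move=> j _; rewrite mxE mul0r.
rewrite -/(dot d0 (lam i)) dd.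
have : (normals lam S *m C) i k = 0 by rewrite mulmx_coker mxE.
rewrite !mxE => H.
suff -> : \sum_j lam i 0 j * C j k = 0 by rewrite mulr0.
rewrite -[RHS]H; apply: eq_bigr => j _; congr (_ * _).
by rewrite /normals mxE inE Hi eqxx.
Qed.
Arguments gp_dir {R n m lam eta lam0 xi x}.

Lemma step (R : realType) (n m : nat)
  (lam : 'I_m -> 'rV[R]_n) (eta : 'I_m -> R) (lam0 : 'rV[R]_n) (xi : R) (t : {set 'I_m}) :
  bounded_Delta lam eta -> general_position lam eta lam0 xi ->
  (exists x, FT lam eta t x /\ 0 <= cutval lam0 xi x) ->
  ((exists x, FT lam eta t x) /\ forall x, FT lam eta t x -> 0 < cutval lam0 xi x) \/
  exists t' : {set 'I_m}, t \subset t' /\ (#|t| < #|t'|)%N /\ exists x, FT lam eta t' x /\ 0 <= cutval lam0 xi x.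
Proof.
move=> Hb Hgp [x [[Hx Hxt] Hc]].
have [Hc0|Hcp] := eqVneq (cutval lam0 xi x) 0.
  have [d [Hd Hdi]] := gp_dir Hgp Hc0.
  pose T := [set i | ineq lam eta i x == 0].
  have HT : forall i, i \in T -> ineq lam eta i x = 0 /\ dot d (lam i) = 0.
    by move=> i; rewrite inE => /eqP e; split => //; exact: Hdi.
  have [j [z [HjT [Hz Hcz]]]] := ray xi T Hb Hx Hd HT.
  right; exists (j |: T); split; [|split].
  - apply: subset_trans (subsetUr _ _); apply/subsetP => i /Hxt Hi; by rewrite inE Hi.
  - rewrite cardsU1 HjT add1n ltnS; apply: subset_leq_card.
    apply/subsetP => i /Hxt Hi; by rewrite inE Hi.
  - by exists z; split => //; rewrite -Hc0.
have Hcx : 0 < cutval lam0 xi x by rewrite lt0r Hcp.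
case: (classic (forall y, FT lam eta t y -> 0 < cutval lam0 xi y)) => Hall.
  by left; split => //; exists x.
right.
have [y [Hy Hcy]] : exists y, FT lam eta t y /\ cutval lam0 xi y <= 0.
  apply: NNPP => Hn; apply: Hall => y Hy; rewrite ltNge; apply/negP => H; apply: Hn; by exists y.
have Hd : 0 < dot (x - y) lam0.
  rewrite dotB; move: Hcx Hcy; rewrite /cutval; lra.
have Ht : forall i, i \in t -> ineq lam eta i x = 0 /\ dot (x - y) (lam i) = 0.
  move=> i Hi; split; first exact: Hxt.
  rewrite dotB; have e1 := Hxt i Hi; have e2 := proj2 Hy i Hi; move: e1 e2; rewrite /ineq; lra.
have [j [z [Hjt [Hz Hcz]]]] := ray xi t Hb Hx Hd Ht.
exists (j |: t); split; [exact: subsetUr|split].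
- by rewrite cardsU1 Hjt.
- exists z; split => //; exact: le_trans (ltW Hcx) Hcz.
Qed.
Arguments step {R n m lam eta lam0 xi t}.

Lemma grow (R : realType) (n m : nat)
  (lam : 'I_m -> 'rV[R]_n) (eta : 'I_m -> R) (lam0 : 'rV[R]_n) (xi : R) :
  bounded_Delta lam eta -> general_position lam eta lam0 xi ->
  forall k (t : {set 'I_m}), (#|[set: 'I_m]| - #|t| <= k)%N ->
  (exists x, FT lam eta t x /\ 0 <= cutval lam0 xi x) ->
  exists t' : {set 'I_m}, t \subset t' /\ (exists x, FT lam eta t' x) /\
     forall x, FT lam eta t' x -> 0 < cutval lam0 xi x.
Proof.
move=> Hb Hgp; elim=> [|k IH] t Hk Ht; (have [[H1 H2]|[t' [Hs [Hlt Ht']]]] := step Hb Hgp Ht;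
  first by exists t; split).
- exfalso; have := subset_leq_card (subsetT t'); move: Hk Hlt; lia.
- have [t'' [Hs' Hr]] := IH t' ltac:(move: Hk Hlt; lia) Ht'.
  exists t''; split => //; exact: subset_trans Hs Hs'.
Qed.
Arguments grow {R n m lam eta lam0 xi}.

Lemma key (R : realType) (n m : nat)
  (lam : 'I_m -> 'rV[R]_n) (eta : 'I_m -> R) (lam0 : 'rV[R]_n) (xi : R)
  (s : {set option 'I_m}) (x : 'rV[R]_n) :
  bounded_Delta lam eta -> general_position lam eta lam0 xi ->
  None \notin s -> F lam eta lam0 xi s x -> 0 <= cutval lam0 xi x -> Zbar lam eta lam0 xi s.
Proof.
move=> Hb Hgp HN [Hx Hxs] Hc.
pose s0 := [set i | Some i \in s].
have Hs0 : FT lam eta s0 x.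
  split => // i; rewrite inE => /Hxs /=; by case.
have [t' [Hst [[y Hy] Hpos]]] := grow Hb Hgp _ s0 (leqnn _) (ex_intro _ x (conj Hs0 Hc)).
right; exists (Some @: t'); split; last first.
  apply/subsetP => -[i|] Hi; last by rewrite Hi in HN.
  apply: imset_f; apply: (subsetP Hst); by rewrite inE.
have FF : forall z, F lam eta lam0 xi (Some @: t') z -> FT lam eta t' z.
  move=> z [Hz Hzi]; split => // i Hi.
  by have [] := Hzi (Some i) (imset_f _ Hi).
split.
  exists y; case: Hy => Hy1 Hy2; split => // o /imsetP [i Hi ->] /=; split => //; exact: Hy2.
move=> z /FF Hz; have := Hpos z Hz => Hp; split.
  by split; [case: Hz|exact: ltW].
by case=> _ H; move: Hp; rewrite H ltxx.
Qed.
Arguments key {R n m lam eta lam0 xi s x}.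

Theorem lemma3p11 (R : realType) (n m : nat)
  (lam : 'I_m -> 'rV[R]_n) (eta : 'I_m -> R) (lam0 : 'rV[R]_n) (xi : R) :
  simple_polytope lam eta ->
  facets_nonempty lam eta ->
  generic_cut lam eta lam0 xi ->
  (forall s : {set option 'I_m},
     Kplus lam eta lam0 xi s /\ ~ Zbar lam eta lam0 xi s <-> Oplus lam eta lam0 xi s) /\
  (forall s : {set option 'I_m},
     KDelta lam eta lam0 xi s /\ ~ Zbar lam eta lam0 xi s <-> Wminus lam eta lam0 xi s).
Proof.
move=> [Hb _ _] _ [Hgp [w Hw]].
split => s; split.
- move=> [Kp nZ]; split => //.
  case: (boolP (None \in s)) => // HN; exfalso; apply: nZ.
  case: Kp => [->|[x Hx]]; first by left.
  case: (set_0Vmem s) => [->|[o Ho]]; first by left.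
  have [_ [HxD Hcx]] := Hx o Ho.
  apply: (@key _ _ _ _ _ _ _ _ x Hb Hgp HN) => //; split => // i Hi; exact: (Hx i Hi).1.
- move=> [Kp HN]; split => // -[Hs|[t [[[x Fx] Ht] Hst]]].
    by move: HN; rewrite Hs in_set0.
  have HNt : None \in t := subsetP Hst _ HN.
  by have [_ []] := Ht x Fx; exact: (Fx.2 _ HNt).
- move=> [[HN Kd] nZ].
  case: Kd => [Hs|[x Hx]]; first by exfalso; apply: nZ; left.
  case: (set_0Vmem s) => [Hs|[o Ho]]; first by exfalso; apply: nZ; left.
  have HxD : inDelta lam eta x.
    by move: (Hx o Ho); case: o Ho => [i|] Ho /=; [case|rewrite Ho in HN].
  split; first by exists x.
  move=> y Fy; have [Hlt|Hge] := ltP (cutval lam0 xi y) 0.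
    split; first by split; [case: Fy|exact: ltW].
    by case=> _ H; move: Hlt; rewrite H ltxx.
  by exfalso; apply: nZ; apply: (key Hb Hgp HN Fy).
- move=> [[x Fx] Hall]; split.
    split.
      apply/negP => HN; have [_ []] := Hall x Fx; exact: (Fx.2 _ HN).
    by right; exists x; exact: Fx.2.
  move=> [Hs|[t [[[y Fy] Ht] Hst]]].
    have Fw : F lam eta lam0 xi s w by split; [case: Hw|move=> i; rewrite Hs in_set0].
    by have [_ []] := Hall w Fw.
  have Fys : F lam eta lam0 xi s y.
    by split; [case: Fy|move=> i Hi; apply: Fy.2; exact: (subsetP Hst)].
  have [[HyD Hy1] Hy2] := Hall y Fys.
  have [[_ Hy3] _] := Ht y Fy.
  by apply: Hy2; split => //; apply/eqP; rewrite eq_le Hy1 Hy3.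
Qed.
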